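(* Let $2\leq d_1\leq d_2$ and let $\rho$ be a quantum state on $\mathbb{C}^{d_1}\otimes\mathbb{C}^{d_2}$ such that $(T_{d_1}\otimes\mathrm{id}_{d_2})(\rho)=\rho$. Then $\mathrm{SN}(\rho)\leq d_1-1$.
   Context: $T_{d}$ is the transposition on $\mathcal{M}_d$ in the computational basis, $T_d(\ket{i}\bra{j})=\ket{j}\bra{i}$. A quantum state is a unit-trace positive semidefinite matrix. The Schmidt rank of $\ket{\psi}$ is the rank of $\mathrm{tr}_A\ket{\psi}\bra{\psi}$; $\mathrm{SN}(\rho)$ is the minimum over decompositions $\rho=\sum_ip_i\ket{\psi_i}\bra{\psi_i}$ into convex combinations of pure states of the maximal Schmidt rank of the $\ket{\psi_i}$. *)

(* Defs.v *)
From mathcomp Require Import all_boot all_order all_algebra all_field.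
Set Implicit Arguments. Unset Strict Implicit. Unset Printing Implicit Defensive.
Import Order.TTheory GRing.Theory Num.Theory.
Local Open Scope ring_scope.

(* Computational basis of C^{d1} (x) C^{d2}: |i> (x) |j> is the basis vector
   with index  mxvec_index i j = i * d2 + j  in 'I_(d1 * d2). *)

Definition adjmx (m n : nat) (A : 'M[algC]_(m, n)) : 'M[algC]_(n, m) :=
  (map_mx (@Num.conj _) A)^T.

Definition psd (n : nat) (A : 'M[algC]_n) : Prop :=
  adjmx A = A /\ forall v : 'cV[algC]_n, 0 <= (adjmx v *m A *m v) 0 0.

Definition is_state (n : nat) (rho : 'M[algC]_n) : Prop :=
  psd rho /\ \tr rho = 1.

(* (T_{d1} (x) id_{d2}) : partial transpose on the first factor, defined on
   matrix units |i j><k l|  |->  |k j><i l| and extended linearly *)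
Definition ptransA (d1 d2 : nat) (rho : 'M[algC]_(d1 * d2)) : 'M[algC]_(d1 * d2) :=
  \sum_(i < d1) \sum_(j < d2) \sum_(k < d1) \sum_(l < d2)
     rho (mxvec_index i j) (mxvec_index k l) *:
       delta_mx (mxvec_index k j) (mxvec_index i l).

Definition ptraceA (d1 d2 : nat) (X : 'M[algC]_(d1 * d2)) : 'M[algC]_d2 :=
  \matrix_(j < d2, l < d2) \sum_(i < d1) X (mxvec_index i j) (mxvec_index i l).

Definition schmidt_rank (d1 d2 : nat) (psi : 'cV[algC]_(d1 * d2)) : nat :=
  \rank (ptraceA (psi *m adjmx psi)).

(* This is the
   unfolding of "min over decompositions of the max Schmidt rank is <= r". *)
Definition schmidt_number_le (d1 d2 : nat) (rho : 'M[algC]_(d1 * d2)) (r : nat) : Prop :=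
  exists (m : nat) (p : 'I_m -> algC) (psi : 'I_m -> 'cV[algC]_(d1 * d2)),
    [/\ forall a, 0 <= p a,
        \sum_(a < m) p a = 1,
        forall a, (adjmx (psi a) *m psi a) 0 0 = 1,
        rho = \sum_(a < m) p a *: (psi a *m adjmx (psi a)) &
        forall a, (schmidt_rank (psi a) <= r)%N].

(* Main.v *)
Require Import Defs.
From mathcomp Require Import all_boot all_order all_algebra all_field.
Import Order.TTheory GRing.Theory Num.Theory Num.Def.
Local Open Scope ring_scope.
Set Implicit Arguments. Unset Strict Implicit. Unset Printing Implicit Defensive.

Section Adj.
Lemma adjE m n (A : 'M[algC]_(m,n)) i j : adjmx A i j = (A j i)^*.
Proof. by rewrite /adjmx !mxE. Qed.
Lemma adjK m n (A : 'M[algC]_(m,n)) : adjmx (adjmx A) = A.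
Proof. by apply/matrixP=> i j; rewrite !adjE conjCK. Qed.
Lemma adjM m n p (A : 'M[algC]_(m,n)) (B : 'M[algC]_(n,p)) :
  adjmx (A *m B) = adjmx B *m adjmx A.
Proof.
apply/matrixP=> i j; rewrite adjE !mxE rmorph_sum; apply: eq_bigr => k _.
by rewrite !adjE rmorphM mulrC.
Qed.
Lemma adjD m n (A B : 'M[algC]_(m,n)) : adjmx (A + B) = adjmx A + adjmx B.
Proof. by apply/matrixP=> i j; rewrite /adjmx !mxE rmorphD. Qed.
Lemma adjN m n (A : 'M[algC]_(m,n)) : adjmx (- A) = - adjmx A.
Proof. by apply/matrixP=> i j; rewrite /adjmx !mxE rmorphN. Qed.
Lemma adjB m n (A B : 'M[algC]_(m,n)) : adjmx (A - B) = adjmx A - adjmx B.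
Proof. by rewrite adjD adjN. Qed.
Lemma adjZ m n a (A : 'M[algC]_(m,n)) : adjmx (a *: A) = a^* *: adjmx A.
Proof. by apply/matrixP=> i j; rewrite /adjmx !mxE rmorphM. Qed.
Lemma adj1 n : adjmx (1%:M : 'M[algC]_n) = 1%:M.
Proof. by apply/matrixP=> i j; rewrite adjE !mxE eq_sym; case: eqP; rewrite ?conjC1 ?conjC0. Qed.
Lemma adj_diag n (d : 'rV[algC]_n) : adjmx (diag_mx d) = diag_mx (map_mx conjC d).
Proof.
apply/matrixP=> i j; rewrite adjE !mxE eq_sym.
by case: eqP => [->|]; rewrite ?mulr1n ?mulr0n ?conjC0.
Qed.
Lemma adj_sum m n I (r : seq I) (P : pred I) (F : I -> 'M[algC]_(m,n)) :
  adjmx (\sum_(i <- r | P i) F i) = \sum_(i <- r | P i) adjmx (F i).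
Proof.
elim/big_rec2: _ => [|i x y _ <-]; last by rewrite adjD.
by apply/matrixP=> i j; rewrite adjE !mxE conjC0.
Qed.
Lemma adjtE m n (A : 'M[algC]_(m,n)) : adjmx A = map_mx conjC (A^T).
Proof. by rewrite /adjmx map_trmx. Qed.
End Adj.

Lemma herm_spec n (A : 'M[algC]_n) : adjmx A = A ->
  exists (U : 'M[algC]_n) (d : 'rV[algC]_n),
  [/\ U *m adjmx U = 1%:M, adjmx U *m U = 1%:M,
      A = adjmx U *m diag_mx d *m U & forall i, (d 0 i)^* = d 0 i].
Proof.
move=> hA.
have hH : A \is hermsymmx.
  by rewrite qualifE /= expr0 scale1r -adjtE hA.
have /orthomx_spectralP eA := hermitian_normalmx hH.
have uU := spectral_unitarymx A.
have hr := hermitian_spectral_diag_real hH.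
exists (spectralmx A), (spectral_diag A).
have u1 : spectralmx A *m adjmx (spectralmx A) = 1%:M.
  by rewrite adjtE; apply/unitarymxP.
split => //.
- exact: mulmx1C.
- by rewrite {1}eA invmx_unitary // -adjtE.
- by move=> i; apply: conj_Creal; move/mxOverP: hr; apply.
Qed.

Lemma XX_eq0 m n (X : 'M[algC]_(m,n)) : X *m adjmx X = 0 -> X = 0.
Proof.
move=> h; apply/matrixP=> i j; rewrite mxE.
have /matrixP/(_ i i) := h; rewrite !mxE => hs.
have H := @psumr_eq0P _ _ predT (fun k => `|X i k| ^+ 2) (fun k _ => exprn_ge0 2 (normr_ge0 _)).
have hs' : \sum_k `|X i k| ^+ 2 = 0.
  by rewrite -[in RHS]hs; apply: eq_bigr => k _; rewrite normCK adjE.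
by move/eqP: (H hs' j isT); rewrite expf_eq0 normr_eq0 => /andP[_ /eqP].
Qed.

Lemma adj_delta m n (i : 'I_m) (j : 'I_n) : adjmx (delta_mx i j) = delta_mx j i :> 'M[algC]_(n,m).
Proof.
apply/matrixP=> a b; rewrite adjE !mxE.
by case: (a == j); case: (b == i); rewrite /= ?conjC1 ?conjC0.
Qed.

Lemma psd_factor n (A : 'M[algC]_n) : psd A -> exists G : 'M[algC]_n, A = G *m adjmx G.
Proof.
case=> hA hpos; have [U [d [u1 u2 eA hd]]] := herm_spec hA.
have dge0 : forall i, 0 <= d 0 i.
  move=> i; have := hpos (adjmx U *m delta_mx i 0).
  rewrite adjM adjK eA !mulmxA -[_ *m U *m adjmx U]mulmxA u1 mulmx1.
  rewrite -[_ *m U *m adjmx U]mulmxA u1 mulmx1 adj_delta.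
  by rewrite -rowE -colE !mxE eqxx mulr1n.
exists (adjmx U *m diag_mx (map_mx sqrtC d)).
rewrite adjM adjK adj_diag mulmxA -[_ *m diag_mx _ *m diag_mx _]mulmxA mulmx_diag eA.
congr (_ *m diag_mx _ *m _); apply/rowP=> i; rewrite !mxE.
by rewrite geC0_conj ?sqrtC_ge0 // -expr2 sqrtCK.
Qed.

Lemma fKK (x : algC) : x * x^-1 * x = x.
Proof. by case: (eqVneq x 0) => [->|nz]; rewrite ?mulr0 ?mul0r // mulfV // mul1r. Qed.
Lemma fKK' (x : algC) : x^-1 * x * x^-1 = x^-1.
Proof. by case: (eqVneq x 0) => [->|nz]; rewrite ?invr0 ?mulr0 ?mul0r // mulVf // mul1r. Qed.

Lemma pinv n (B : 'M[algC]_n) : adjmx B = B ->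
  exists Bp : 'M[algC]_n, [/\ adjmx Bp = Bp, B *m Bp *m B = B & Bp *m B *m Bp = Bp].
Proof.
move=> hB; have [W [d [u1 u2 eB hd]]] := herm_spec hB.
have u1' m (Y : 'M_(n,m)) : W *m (adjmx W *m Y) = Y by rewrite mulmxA u1 mul1mx.
exists (adjmx W *m diag_mx (map_mx GRing.inv d) *m W); split.
- rewrite !adjM adjK adj_diag mulmxA; congr (_ *m diag_mx _ *m _).
  by apply/rowP=> i; rewrite !mxE; apply/CrealP; rewrite rpredV; apply/CrealP; exact: hd.
- rewrite eB -!mulmxA !u1' !mulmxA -[_ *m diag_mx _ *m diag_mx _]mulmxA mulmx_diag -[_ *m diag_mx _ *m diag_mx _]mulmxA mulmx_diag; congr (_ *m diag_mx _ *m _).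
  by apply/rowP=> i; rewrite !mxE mulrA fKK.
- rewrite eB -!mulmxA !u1' !mulmxA -[_ *m diag_mx _ *m diag_mx _]mulmxA mulmx_diag -[_ *m diag_mx _ *m diag_mx _]mulmxA mulmx_diag; congr (_ *m diag_mx _ *m _).
  by apply/rowP=> i; rewrite !mxE mulrA fKK'.
Qed.

Lemma core p n (S T : 'M[algC]_(p,n)) : adjmx (S *m adjmx T) = S *m adjmx T ->
  exists (Pi U : 'M[algC]_n) (k : 'rV[algC]_n),
  [/\ Pi *m Pi = Pi, adjmx Pi = Pi, S *m Pi = S, adjmx U *m U = 1%:M &
      T *m Pi *m adjmx U = S *m adjmx U *m diag_mx k].
Proof.
move=> hH.
have hB : adjmx (S *m adjmx S) = S *m adjmx S by rewrite adjM adjK.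
have [Bp [hBp e1 e2]] := pinv hB.
rewrite !mulmxA in e1 e2.
have e1' m (X : 'M_(m,p)) : X *m S *m adjmx S *m Bp *m S *m adjmx S = X *m S *m adjmx S.
  by rewrite -!mulmxA; congr (X *m _); rewrite !mulmxA; exact: e1.
have e2' m (X : 'M_(m,p)) : X *m Bp *m S *m adjmx S *m Bp = X *m Bp.
  by rewrite -!mulmxA; congr (X *m _); rewrite !mulmxA; exact: e2.
have hS : S *m adjmx S *m Bp *m S = S.
  apply/eqP; rewrite -subr_eq0; apply/eqP; apply: XX_eq0.
  rewrite adjB !adjM adjK hBp mulmxBl !mulmxBr !mulmxA e1' e1.
  by rewrite !subrr.
have hS' m (X : 'M_(m,p)) : X *m S *m adjmx S *m Bp *m S = X *m S.
  by rewrite -!mulmxA; congr (X *m _); rewrite !mulmxA; exact: hS.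
pose Pi := adjmx S *m Bp *m S.
pose K := adjmx S *m Bp *m (S *m adjmx T) *m Bp *m S.
have hH' : T *m adjmx S = S *m adjmx T by rewrite -hH adjM adjK.
have hK : adjmx K = K by rewrite /K !adjM !adjK hBp hH' !mulmxA.
have [U [k [u1 u2 eK hk]]] := herm_spec hK.
exists Pi, U, k; split.
- by rewrite /Pi !mulmxA e2'.
- by rewrite /Pi !adjM adjK hBp mulmxA.
- by rewrite /Pi !mulmxA hS.
- exact: u2.
have -> : T *m Pi = S *m K.
  by rewrite /K /Pi !mulmxA hS -hH' ?mulmxA.
by rewrite eK !mulmxA -[_ *m U *m adjmx U]mulmxA u1 mulmx1.
Qed.

Section Blocks.
Variables d1 d2 : nat.
Local Notation N := (d1 * d2)%N.

Definition Bk (i : 'I_d1) q (X : 'M[algC]_(N, q)) : 'M[algC]_(d2, q) :=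
  \matrix_(j, c) X (mxvec_index i j) c.

Lemma BkM i q r (X : 'M[algC]_(N, q)) (Y : 'M[algC]_(q, r)) : Bk i (X *m Y) = Bk i X *m Y.
Proof. by apply/matrixP=> j c; rewrite !mxE; apply: eq_bigr => k _; rewrite mxE. Qed.

Definition Mof (phi : 'cV[algC]_N) : 'M[algC]_(d1, d2) := \matrix_(i, j) phi (mxvec_index i j) 0.

Lemma ptraceA_pure (phi : 'cV[algC]_N) :
  ptraceA (phi *m adjmx phi) = (Mof phi)^T *m map_mx conjC (Mof phi).
Proof.
apply/matrixP=> j l; rewrite !mxE; apply: eq_bigr => i _.
by rewrite !mxE big_ord1 adjE.
Qed.

Lemma rank_good (phi : 'cV[algC]_N) (c : 'rV[algC]_d1) :
  c != 0 -> c *m Mof phi = 0 -> (schmidt_rank phi <= d1.-1)%N.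
Proof.
move=> cn0 cM; rewrite /schmidt_rank ptraceA_pure.
apply: leq_trans (mxrankM_maxl _ _) _; rewrite mxrank_tr.
have : (c <= kermx (Mof phi))%MS by rewrite sub_kermx cM.
move/mxrankS; rewrite mxrank_ker rank_rV cn0.
by rewrite subn_gt0 => h; rewrite -ltnS (ltn_predK h).
Qed.
End Blocks.

Lemma mul_sum_col m n p (A : 'M[algC]_(m,n)) (B : 'M[algC]_(n,p)) :
  A *m B = \sum_c (col c A *m row c B).
Proof.
apply/matrixP=> i j; rewrite !mxE summxE; apply: eq_bigr => c _.
by rewrite !mxE big_ord1 !mxE.
Qed.

Lemma adj_col m n (A : 'M[algC]_(m,n)) c : adjmx (col c A) = row c (adjmx A).
Proof. by apply/matrixP=> i j; rewrite /adjmx !mxE. Qed.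

Lemma adj_row_mx m n1 n2 (A : 'M[algC]_(m,n1)) (B : 'M[algC]_(m,n2)) :
  adjmx (row_mx A B) = col_mx (adjmx A) (adjmx B).
Proof. by rewrite !adjtE tr_row_mx map_col_mx. Qed.

Section Blocks2.
Variables d1 d2 : nat.
Local Notation N := (d1 * d2)%N.

Lemma row_Mof (phi : 'cV[algC]_N) i : row i (Mof phi) = (Bk i phi)^T.
Proof. by apply/rowP=> j; rewrite !mxE. Qed.

Lemma good1 (phi : 'cV[algC]_N) (i0 i1 : 'I_d1) (k : algC) : i0 != i1 ->
  Bk i1 phi = k *: Bk i0 phi -> exists2 c : 'rV[algC]_d1, c != 0 & c *m Mof phi = 0.
Proof.
move=> ne e; exists (k *: delta_mx 0 i0 - delta_mx 0 i1).
  apply/eqP=> /matrixP/(_ 0 i1); rewrite !mxE eqxx eq_sym (negPf ne) /= mulr0 sub0r.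
  by rewrite eqxx mulr1n => /eqP; rewrite oppr_eq0 oner_eq0.
by rewrite mulmxBl -scalemxAl -!rowE !row_Mof e linearZ /= subrr.
Qed.

Lemma good0 (phi : 'cV[algC]_N) (i0 : 'I_d1) :
  Bk i0 phi = 0 -> exists2 c : 'rV[algC]_d1, c != 0 & c *m Mof phi = 0.
Proof.
move=> e; exists (delta_mx 0 i0).
  by apply/eqP=> /matrixP/(_ 0 i0); rewrite !mxE !eqxx; move/eqP; rewrite oner_eq0.
by rewrite -rowE row_Mof e trmx0.
Qed.
End Blocks2.

Section Decomp.
Variables d1 d2 : nat.
Local Notation N := (d1 * d2)%N.

Lemma BkBk q (G : 'M[algC]_(N, q)) i i' j l :
  (Bk i G *m adjmx (Bk i' G)) j l = (G *m adjmx G) (mxvec_index i j) (mxvec_index i' l).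
Proof. by rewrite !mxE; apply: eq_bigr => c _; rewrite !adjE !mxE. Qed.

Lemma diag_delta n (k : 'rV[algC]_n) c : diag_mx k *m delta_mx c 0 = k 0 c *: delta_mx c (0 : 'I_1).
Proof.
rewrite mul_diag_mx; apply/matrixP=> i j; rewrite !mxE.
by case: (eqVneq i c) => [->|ne]; rewrite ?mulr1 ?mulr0 //.
Qed.

Lemma decomp (rho : 'M[algC]_N) (i0 i1 : 'I_d1) : i0 != i1 -> psd rho ->
  (forall j l, rho (mxvec_index i0 j) (mxvec_index i1 l) =
               (rho (mxvec_index i0 l) (mxvec_index i1 j))^*) ->
  exists m (phi : 'I_m -> 'cV[algC]_N),
    rho = \sum_a phi a *m adjmx (phi a) /\
    forall a, exists2 c : 'rV[algC]_d1, c != 0 & c *m Mof (phi a) = 0.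
Proof.
move=> ne hpsd hsym.
have [G eG] := psd_factor hpsd.
pose S := Bk i0 G; pose T := Bk i1 G.
have hH : adjmx (S *m adjmx T) = S *m adjmx T.
  apply/matrixP=> j l; rewrite adjE !BkBk -eG.
  by rewrite hsym conjCK.
have [Pi [U [k [p1 p2 p3 u2 e]]]] := core hH.
pose Y1 := G *m Pi *m adjmx U; pose Y2 := G *m (1%:M - Pi); pose Z := row_mx Y1 Y2.
exists (N + N)%N, (fun a => col a Z); split.
  under eq_bigr do rewrite adj_col.
  rewrite -mul_sum_col adj_row_mx mul_row_col /Y1 /Y2 !adjM adjK p2 adjB adj1 p2.
  have q : (1%:M - Pi) *m (1%:M - Pi) = 1%:M - Pi.
    by rewrite mulmxBl !mulmxBr !mul1mx !mulmx1 p1 subrr subr0.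
  rewrite !mulmxA -[_ *m adjmx U *m U]mulmxA u2 mulmx1 -[G *m Pi *m Pi]mulmxA p1.
  rewrite -[G *m (1%:M - Pi) *m (1%:M - Pi)]mulmxA q -mulmxDl -mulmxDr.
  by rewrite addrC subrK mulmx1 eG.
move=> a; case: (split_ordP a) => c ->.
  have -> : col (lshift _ c) Z = col c Y1.
    by apply/matrixP=> i j; rewrite [LHS]mxE [RHS]mxE /Z row_mxEl.
  apply: (@good1 _ _ _ i0 i1 (k 0 c) ne).
  have hA : Bk i0 Y1 = S *m adjmx U.
    by rewrite /Y1 (BkM i0 (G *m Pi)) (BkM i0 G) p3.
  have hB : Bk i1 Y1 = S *m adjmx U *m diag_mx k.
    by rewrite /Y1 (BkM i1 (G *m Pi)) (BkM i1 G) e.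
  rewrite !colE (BkM i1 Y1) (BkM i0 Y1) hA hB.
  by rewrite -!mulmxA diag_delta !scalemxAr.
have -> : col (rshift _ c) Z = col c Y2.
  by apply/matrixP=> i j; rewrite [LHS]mxE [RHS]mxE /Z row_mxEr.
apply: (@good0 _ _ _ i0).
by rewrite colE (BkM i0 Y2) /Y2 (BkM i0 G) -/S mulmxBr mulmx1 p3 subrr mul0mx.
Qed.
End Decomp.

Lemma sum_ind (I : finType) (c : I) (F : I -> algC) : \sum_i (c == i)%:R * F i = F c.
Proof.
rewrite (bigD1 c) //= eqxx mul1r big1 ?addr0 // => i; rewrite eq_sym => /negPf ->.
by rewrite mul0r.
Qed.

Lemma mvi_eq m n (a c : 'I_m) (b d : 'I_n) :
  (mxvec_index a b == mxvec_index c d) = (a == c) && (b == d).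
Proof.
by rewrite /mxvec_index (inj_eq (@cast_ord_inj _ _ _)) (inj_eq enum_rank_inj).
Qed.

Lemma ind4 (x : algC) (A B C D : bool) :
  x * ((A && B) && (C && D))%:R = D%:R * (A%:R * (B%:R * (C%:R * x))).
Proof.
by case: A; case: B; case: C; case: D; rewrite /= ?mulr1 ?mulr0 ?mul0r ?mul1r.
Qed.

Lemma ptransA_E d1 d2 (rho : 'M[algC]_(d1 * d2)) a b c d :
  ptransA rho (mxvec_index a b) (mxvec_index c d) = rho (mxvec_index c b) (mxvec_index a d).
Proof.
rewrite /ptransA !summxE.
under eq_bigr => i _ do rewrite summxE.
under eq_bigr => i _ do under eq_bigr => j _ do rewrite summxE.
under eq_bigr => i _ do under eq_bigr => j _ do under eq_bigr => k _ do rewrite summxE.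
under eq_bigr => i _ do under eq_bigr => j _ do under eq_bigr => k _ do
  under eq_bigr => l _ do rewrite !mxE !mvi_eq ind4.
under eq_bigr => i _ do under eq_bigr => j _ do under eq_bigr => k _ do rewrite sum_ind.
under eq_bigr => i _ do under eq_bigr => j _ do rewrite sum_ind.
under eq_bigr => i _ do rewrite sum_ind.
by rewrite sum_ind.
Qed.

Lemma Mof_scale d1 d2 (a : algC) (phi : 'cV[algC]_(d1 * d2)) : Mof (a *: phi) = a *: Mof phi.
Proof. by apply/matrixP=> i j; rewrite !mxE. Qed.

Lemma pnorm_ge0 n (phi : 'cV[algC]_n) : 0 <= (adjmx phi *m phi) 0 0.
Proof.
rewrite mxE; apply: sumr_ge0 => k _; rewrite adjE -normCKC; exact: exprn_ge0.
Qed.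

Lemma pnorm_eq0 n (phi : 'cV[algC]_n) : (adjmx phi *m phi) 0 0 = 0 -> phi = 0.
Proof.
move=> h; rewrite -[phi]adjK; have -> : adjmx phi = 0; last first.
  by apply/matrixP=> i j; rewrite adjE !mxE conjC0.
apply: XX_eq0; rewrite adjK; apply/matrixP=> i j.
by rewrite !ord1 h mxE.
Qed.

Lemma pnorm_tr n (phi : 'cV[algC]_n) : (adjmx phi *m phi) 0 0 = \tr (phi *m adjmx phi).
Proof. by rewrite mxtrace_mulC /mxtrace big_ord1. Qed.

Unset Implicit Arguments.

Theorem theorem20 (d1 d2 : nat) (rho : 'M[algC]_(d1 * d2)) :
  (2 <= d1)%N -> (d1 <= d2)%N ->
  is_state rho ->
  ptransA rho = rho ->
  schmidt_number_le rho d1.-1.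
Proof.
move=> h1 h2 [hpsd htr] hT.
have l0 : (0 < d1)%N by apply: leq_trans h1.
have l1 : (1 < d1)%N by [].
have l2 : (0 < d2)%N by apply: leq_trans h2.
pose i0 := Ordinal l0; pose i1 := Ordinal l1; pose j0 := Ordinal l2.
have ne : i0 != i1 by [].
have hsym : forall j l, rho (mxvec_index i0 j) (mxvec_index i1 l) =
               (rho (mxvec_index i0 l) (mxvec_index i1 j))^*.
  move=> j l; rewrite -{1}hT ptransA_E.
  by rewrite -{1}hpsd.1 adjE.
have [m [phi [erho hgood]]] := decomp ne hpsd hsym.
pose p a := (adjmx (phi a) *m phi a) 0 0.
pose e : 'cV[algC]_(d1 * d2) := delta_mx (mxvec_index i0 j0) 0.
pose psi a := if p a == 0 then e else (sqrtC (p a))^-1 *: phi a.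
have pge0 a : 0 <= p a by exact: pnorm_ge0.
exists m, p, psi; split.
- exact: pge0.
- rewrite -htr erho raddf_sum /=; apply: eq_bigr => a _.
  by rewrite /p pnorm_tr.
- move=> a; rewrite /psi; case: ifP => [_|pn0].
    rewrite /e adj_delta; rewrite mul_delta_mx mxE !eqxx //.
  have sn0 : sqrtC (p a) != 0 by rewrite sqrtC_eq0 pn0.
  rewrite adjZ -scalemxAl -scalemxAr !mxE geC0_conj ?invr_ge0 ?sqrtC_ge0 //.
  have -> : \sum_j adjmx (phi a) 0 j * phi a j 0 = p a by rewrite /p mxE.
  rewrite -[p a in X in _ * (_ * X) = _]sqrtCK expr2 mulKf //.
  by rewrite mulVf.
- rewrite erho; apply: eq_bigr => a _; rewrite /psi; case: ifP => [/eqP p0|pn0].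
    by rewrite (pnorm_eq0 p0) mul0mx p0 scale0r.
  have sn0 : sqrtC (p a) != 0 by rewrite sqrtC_eq0 pn0.
  rewrite adjZ -scalemxAl -scalemxAr !scalerA geC0_conj ?invr_ge0 ?sqrtC_ge0 //.
  have -> : p a * (sqrtC (p a))^-1 * (sqrtC (p a))^-1 = 1.
    by rewrite -{1}(sqrtCK (p a)) expr2 mulfK // mulfV.
  by rewrite scale1r.
- move=> a; rewrite /psi; case: ifP => [_|pn0].
    have [c0 nc0 hc0] : exists2 c : 'rV[algC]_d1, c != 0 & c *m Mof e = 0.
      apply: (@good0 _ _ _ i1); apply/matrixP=> j k; rewrite !mxE mvi_eq.
      by rewrite eq_sym (negPf ne).
    exact: rank_good nc0 hc0.
  have [c nc hc] := hgood a.
  apply: (rank_good nc).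
  by rewrite Mof_scale -scalemxAr hc scaler0.
Qed.
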